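(* For each $\otimes\in\{\mathrm{del},\mathrm{add},\mathrm{edit}\}$, $\textsc{RM}^{\otimes}_{\mathrm{basic}}(aa)\subseteq\mathrm{TC}^0$; i.e. for every sentence $\phi=\forall x\forall y\,\psi$ with $\psi$ quantifier-free over $\{E\}$, $\textsc{RM}^{\otimes}_{\mathrm{basic}}(\phi)\in\mathrm{TC}^0$.
   Context: A basic graph is $(V,E)$ with $E\subseteq V\times V$ symmetric and irreflexive. For $S\subseteq V\times V$, $\|S\|=|\{\{u,v\}:(u,v)\in S\}|$. For a first-order sentence $\phi$ over $\{E\}$, $\textsc{RM}^{\mathrm{edit}}_{\mathrm{basic}}(\phi)$: given a basic graph $(V,E)$ and $k\in\mathbb N$, is there $S$ with $\|S\|\le k$ such that $(V,E\triangle S)$ is a basic graph satisfying $\phi$; del (resp. add) versions require $S\subseteq E$ (resp. $S\cap E=\emptyset$). $\mathrm{TC}^0$: problems decided by constant-depth polynomial-size unbounded fan-in circuits with and/or/not and threshold gates. *)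

(* Defs.v *)
From mathcomp Require Import all_boot.
Set Implicit Arguments. Unset Strict Implicit. Unset Printing Implicit Defensive.

(* Variables are de Bruijn indices: FAll/FEx bind index 0. *)
Inductive form : Type :=
| FE  : nat -> nat -> form
| FEq : nat -> nat -> form
| FNot : form -> form
| FAnd : form -> form -> form
| FOr  : form -> form -> form
| FAll : form -> form
| FEx  : form -> form.

(* satisfaction in the structure (V, E) under the assignment env : seq V,
   where variable i denotes the i-th entry of env (atoms mentioning an
   unassigned variable are false; this never happens for sentences). *)
Fixpoint sat (V : Type) (E : V -> V -> bool) (env : seq V) (f : form) : Prop :=
  match f with
  | FE i j => match onth env i, onth env j with
              | Some u, Some v => E u v | _, _ => False end
  | FEq i j => match onth env i, onth env j with
              | Some u, Some v => u = v | _, _ => False end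
  | FNot g => ~ sat E env g
  | FAnd g h => sat E env g /\ sat E env h
  | FOr g h => sat E env g \/ sat E env h
  | FAll g => forall v : V, sat E (v :: env) g
  | FEx g => exists v : V, sat E (v :: env) g
  end.

Fixpoint bounded (n : nat) (f : form) : bool :=
  match f with
  | FE i j | FEq i j => (i < n) && (j < n)
  | FNot g => bounded n g
  | FAnd g h | FOr g h => bounded n g && bounded n h
  | FAll g | FEx g => bounded n.+1 g
  end.

Definition sentence (f : form) : bool := bounded 0 f.

Fixpoint qfree (f : form) : bool :=
  match f with
  | FE _ _ | FEq _ _ => true
  | FNot g => qfree g
  | FAnd g h | FOr g h => qfree g && qfree h
  | FAll _ | FEx _ => false
  end.

Definition is_aa (phi : form) : Prop :=
  exists psi, phi = FAll (FAll psi) /\ qfree psi.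

Definition basic (V : finType) (E : {set V * V}) : Prop :=
  (forall u v, (u, v) \in E -> (v, u) \in E) /\ (forall u, (u, u) \notin E).

(* ||S|| = number of unordered pairs {u,v} with (u,v) in S *)
Definition normS (V : finType) (S : {set V * V}) : nat :=
  #|[set [set p.1; p.2] | p in S]|.

Definition models (V : finType) (E : {set V * V}) (phi : form) : Prop :=
  sat (fun u v => (u, v) \in E) [::] phi.

Inductive mode := Del | Add | Edit.

Definition RM (m : mode) (phi : form) (V : finType) (E : {set V * V}) (k : nat) : Prop :=
  exists S : {set V * V},
    [/\ normS S <= k,
        match m with
        | Del => S \subset E
        | Add => [disjoint S & E]
        | Edit => True
        end,
        basic ((E :\: S) :|: (S :\: E))
      & models ((E :\: S) :|: (S :\: E)) phi].

(* A wire reads either input bit i (inl i) or the value of gate j (inr j);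
   a gate may only read earlier gates (later/absent gates read as false). *)
Definition wire := (nat + nat)%type.

Inductive gate : Type :=
| GAnd : seq wire -> gate
| GOr  : seq wire -> gate
| GNot : wire -> gate
| GThr : nat -> seq wire -> gate.

Definition circuit := seq gate.

Definition wire_val (x : seq bool) (vals : seq bool) (w : wire) : bool :=
  match w with inl i => nth false x i | inr j => nth false vals j end.

Definition gate_val (x : seq bool) (vals : seq bool) (g : gate) : bool :=
  match g with
  | GAnd ws => all (wire_val x vals) ws
  | GOr ws => has (wire_val x vals) ws
  | GNot w => ~~ wire_val x vals w
  | GThr t ws => t <= count (wire_val x vals) ws
  end.

Definition gate_values (x : seq bool) (C : circuit) : seq bool :=
  foldl (fun vals g => rcons vals (gate_val x vals g)) [::] C.

Definition eval (C : circuit) (x : seq bool) : bool := last false (gate_values x C).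

Definition wire_depth (ds : seq nat) (w : wire) : nat :=
  match w with inl _ => 0 | inr j => nth 0 ds j end.

Definition gate_depth (ds : seq nat) (g : gate) : nat :=
  match g with
  | GAnd ws | GOr ws | GThr _ ws => (foldr maxn 0 (map (wire_depth ds) ws)).+1
  | GNot w => (wire_depth ds w).+1
  end.

Definition depth (C : circuit) : nat :=
  foldr maxn 0 (foldl (fun ds g => rcons ds (gate_depth ds g)) [::] C).

Definition gate_fanin (g : gate) : nat :=
  match g with GAnd ws | GOr ws | GThr _ ws => size ws | GNot _ => 1 end.

Definition csize (C : circuit) : nat := size C + sumn (map gate_fanin C).

(* A graph on V = 'I_n is given by its adjacency matrix (row-major, n*n bits),
   followed by k in binary with b bits (least significant bit first). *)
Definition enc (n b : nat) (E : {set 'I_n * 'I_n}) (k : nat) : seq bool :=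
  [seq (i, j) \in E | i <- enum 'I_n, j <- enum 'I_n] ++
  [seq odd (k %/ 2 ^ i) | i <- iota 0 b].

(* A graph problem with numeric parameter is in (non-uniform) TC^0 if there are
   constants d, c and, for every n and bit-length b, a threshold circuit of
   depth <= d and size <= c * (N+1)^c, N = n*n + b the input length, deciding
   the problem on all basic graphs on n vertices and all k < 2^b. *)
Definition in_TC0 (P : forall n : nat, {set 'I_n * 'I_n} -> nat -> Prop) : Prop :=
  exists d c : nat, forall n b : nat, exists C : circuit,
    [/\ depth C <= d, csize C <= c * (n * n + b).+1 ^ c
      & forall (E : {set 'I_n * 'I_n}) (k : nat), basic E -> k < 2 ^ b ->
          (eval C (enc b E k) = true <-> P n E k)].

(* Main.v *)
Require Import Defs.
From mathcomp Require Import all_boot zify.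
Set Implicit Arguments. Unset Strict Implicit. Unset Printing Implicit Defensive.

Definition wire_ok (m : nat) (w : wire) : bool :=
  match w with inl _ => true | inr j => j < m end.
Definition gate_wires (g : gate) : seq wire :=
  match g with GAnd ws | GOr ws | GThr _ ws => ws | GNot w => [:: w] end.
Definition refs_lt m g := all (wire_ok m) (gate_wires g).

Lemma map_all_eq (T U : Type) (P : pred T) (f g : T -> U) s :
  all P s -> (forall x, P x -> f x = g x) -> map f s = map g s.
Proof. by elim: s => //= a s IH /andP[Ha Hs] H; rewrite H // IH. Qed.

Lemma refs_lt_mono m m' g : m <= m' -> refs_lt m g -> refs_lt m' g.
Proof.
move=> H /allP Hg; apply/allP => w Hw; have := Hg w Hw.
by case: w {Hw} => //= j Hj; apply: leq_trans Hj H.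
Qed.

Lemma wire_val_cat x vals s w : wire_ok (size vals) w ->
  wire_val x (vals ++ s) w = wire_val x vals w.
Proof. by case: w => //= j Hj; rewrite nth_cat Hj. Qed.

Lemma gate_val_cat x vals s g : refs_lt (size vals) g ->
  gate_val x (vals ++ s) g = gate_val x vals g.
Proof.
case: g => [ws|ws|w|t ws] /= H.
- by apply: eq_in_all => w Hw; apply: wire_val_cat; exact: (allP H).
- by apply: eq_in_has => w Hw; apply: wire_val_cat; exact: (allP H).
- by rewrite wire_val_cat //; move: H => /andP[].
- by rewrite (@eq_in_count _ _ (wire_val x vals)) // => w Hw;
    apply: wire_val_cat; exact: (allP H).
Qed.

Lemma foldl_block x vals B : all (refs_lt (size vals)) B ->
  foldl (fun vals g => rcons vals (gate_val x vals g)) vals B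
  = vals ++ map (gate_val x vals) B.
Proof.
elim: B vals => [|g B IH] vals /=; first by rewrite cats0.
move=> /andP[Hg HB]; rewrite IH.
- rewrite -cats1 -catA /=; congr (_ ++ _ :: _).
  by apply: (map_all_eq HB) => g' Hg'; apply: gate_val_cat.
- apply: sub_all HB => g'; apply: refs_lt_mono.
  by rewrite size_rcons.
Qed.

Lemma wire_depth_cat ds s w : wire_ok (size ds) w ->
  wire_depth (ds ++ s) w = wire_depth ds w.
Proof. by case: w => //= j Hj; rewrite nth_cat Hj. Qed.

Lemma gate_depth_cat ds s g : refs_lt (size ds) g ->
  gate_depth (ds ++ s) g = gate_depth ds g.
Proof.
have HM : forall ws, all (wire_ok (size ds)) ws ->
  map (wire_depth (ds ++ s)) ws = map (wire_depth ds) ws.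
  by move=> ws H; apply/eq_in_map => w Hw; apply: wire_depth_cat; exact: (allP H).
case: g => [ws|ws|w|t ws] /= H; try by rewrite HM.
by rewrite wire_depth_cat //; move: H => /andP[].
Qed.

Lemma foldl_block_d ds B : all (refs_lt (size ds)) B ->
  foldl (fun ds g => rcons ds (gate_depth ds g)) ds B
  = ds ++ map (gate_depth ds) B.
Proof.
elim: B ds => [|g B IH] ds /=; first by rewrite cats0.
move=> /andP[Hg HB]; rewrite IH.
- rewrite -cats1 -catA /=; congr (_ ++ _ :: _).
  by apply: (map_all_eq HB) => g' Hg'; apply: gate_depth_cat.
- apply: sub_all HB => g'; apply: refs_lt_mono.
  by rewrite size_rcons.
Qed.

Lemma foldr_maxn_le d s : (foldr maxn 0 s <= d) = all (fun e => e <= d) s.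
Proof. by elim: s => //= a s IH; rewrite geq_max IH. Qed.

Lemma gate_depth_le d ds g : all (fun e => e <= d) ds -> gate_depth ds g <= d.+1.
Proof.
move=> H.
have Hw : forall w, wire_depth ds w <= d.
  case=> //= j; case: (ltnP j (size ds)) => Hj.
  - exact: (allP H _ (mem_nth 0 Hj)).
  - by rewrite nth_default.
case: g => [ws|ws|w|t ws] /=; rewrite ?ltnS ?foldr_maxn_le ?Hw // all_map;
  by apply/allP => w _ /=; apply: Hw.
Qed.

Lemma step_depth d ds B : all (fun e => e <= d) ds ->
  all (fun e => e <= d.+1) (ds ++ map (gate_depth ds) B).
Proof.
move=> H; rewrite all_cat; apply/andP; split.
- by apply: sub_all H => e /leqW.
- by elim: B => //= g B ->; rewrite gate_depth_le.
Qed.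

Lemma sumn_fanin_le B f : all (fun g => gate_fanin g <= f) B ->
  sumn (map gate_fanin B) <= size B * f.
Proof.
elim: B => //= g B IH /andP[H1 H2]; rewrite mulSn; apply: leq_add => //.
exact: IH.
Qed.

Lemma nth_allpairs_sq (S T R : Type) (f : S -> T -> R) (s : seq S) (t : seq T)
  d x0 y0 i j : i < size s -> j < size t ->
  nth d [seq f x y | x <- s, y <- t] (i * size t + j) = f (nth x0 s i) (nth y0 t j).
Proof.
elim: s i => [|a s IH] [|i] // Hi Hj.
- by rewrite allpairs_cons nth_cat size_map Hj (nth_map y0).
- rewrite allpairs_cons nth_cat size_map mulSn -addnA ifF; last by lia.
  by rewrite addKn IH.
Qed.

Lemma enc_edge n b (E : {set 'I_n * 'I_n}) k (i j : 'I_n) :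
  nth false (enc b E k) (i * n + j) = ((i, j) \in E).
Proof.
have Hlt : i * n + j < n * n.
  have := ltn_ord i; have := ltn_ord j; nia.
rewrite /enc nth_cat size_allpairs size_enum_ord Hlt.
have := @nth_allpairs_sq _ _ _ (fun i j => (i, j) \in E) (enum 'I_n) (enum 'I_n)
  false i j i j.
by rewrite size_enum_ord !nth_ord_enum => ->.
Qed.

Lemma enc_bit n b (E : {set 'I_n * 'I_n}) k i : i < b ->
  nth false (enc b E k) (n * n + i) = odd (k %/ 2 ^ i).
Proof.
move=> Hi; rewrite /enc nth_cat size_allpairs size_enum_ord ifF; last by lia.
by rewrite addKn (nth_map 0) ?size_iota // nth_iota.
Qed.

Lemma sumn_iota F b : sumn (map F (iota 0 b)) = \sum_(0 <= i < b) F i.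
Proof. by rewrite sumnE big_map /index_iota subn0. Qed.

Lemma binary_sum b k : k < 2 ^ b -> \sum_(0 <= i < b) 2 ^ i * odd (k %/ 2 ^ i) = k.
Proof.
elim: b k => [|b IH] k Hk.
- by rewrite big_geq //; move: Hk; rewrite expn0; case: k.
- rewrite big_nat_recl // expn0 divn1 mul1n.
  have -> : \sum_(0 <= i < b) 2 ^ i.+1 * odd (k %/ 2 ^ i.+1)
          = 2 * \sum_(0 <= i < b) 2 ^ i * odd (k %/ 2 %/ 2 ^ i).
    rewrite big_distrr /=; apply: eq_bigr => i _.
    by rewrite expnS -divnMA mulnA.
  rewrite IH; last by rewrite expnS in Hk; rewrite ltn_divLR //; lia.
  by rewrite {3}(divn_eq k 2) modn2 mulnC addnC.
Qed.

Lemma sum_min_ge (a : nat -> nat) W b :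
  minn W (\sum_(0 <= i < b) a i) <= \sum_(0 <= i < b) minn (a i) W.
Proof.
elim: b => [|b IH]; first by rewrite !big_geq.
rewrite !big_nat_recr //=; lia.
Qed.

Lemma kcount_spec W b k s : k < 2 ^ b -> s <= W ->
  (s <= \sum_(0 <= i < b) odd (k %/ 2 ^ i) * minn (2 ^ i) W) = (s <= k).
Proof.
move=> Hk Hs.
have E1 : \sum_(0 <= i < b) odd (k %/ 2 ^ i) * minn (2 ^ i) W
        = \sum_(0 <= i < b) minn (2 ^ i * odd (k %/ 2 ^ i)) W.
  by apply: eq_bigr => i _; case: (odd _); rewrite ?muln0 ?mul0n ?muln1 ?mul1n ?min0n.
rewrite E1.
have Hup : \sum_(0 <= i < b) minn (2 ^ i * odd (k %/ 2 ^ i)) W <= k.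
  rewrite -[leqRHS](binary_sum Hk); apply: leq_sum => i _; exact: geq_minl.
have Hlo := sum_min_ge (fun i => 2 ^ i * odd (k %/ 2 ^ i)) W b.
rewrite binary_sum // in Hlo.
apply/idP/idP => H; lia.
Qed.

Definition Dset n : {set 'I_n * 'I_n} := [set p : 'I_n * 'I_n | p.1 < p.2].
Definition Tc n : {set 'I_n * 'I_n} := [set p : 'I_n * 'I_n | p.1 != p.2].

Definition modec (m : mode) n (S E : {set 'I_n * 'I_n}) : Prop :=
  match m with Del => S \subset E | Add => [disjoint S & E] | Edit => True end.

Lemma normS_sym n (S : {set 'I_n * 'I_n}) :
  (forall u v, (u, v) \in S -> (v, u) \in S) -> (forall u, (u, u) \notin S) ->
  normS S = #|S :&: Dset n|.
Proof.
move=> Hsym Hirr; rewrite /normS.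
have -> : [set [set p.1; p.2] | p in S] = [set [set p.1; p.2] | p in S :&: Dset n].
  apply/setP => X; apply/imsetP/imsetP => [[[u v] Hp ->]|[p Hp ->]] /=.
  - case: (ltngtP u v) => H.
    + by exists (u, v) => //; rewrite !inE Hp /=.
    + by exists (v, u); [rewrite !inE Hsym //= | rewrite /= setUC].
    + have Huv : u = v by apply: val_inj.
      by rewrite Huv (negbTE (Hirr v)) in Hp.
  - by exists p => //; move: Hp; rewrite inE => /andP[].
rewrite card_in_imset // => [[a b] [c d]]; rewrite !inE /= => /andP[_ Hab] /andP[_ Hcd] Heq.
have Ha : a \in [set c; d] by rewrite -Heq set21.
have Hb : b \in [set c; d] by rewrite -Heq set22.
have Hc : c \in [set a; b] by rewrite Heq set21.
move: Ha Hb Hc; rewrite !in_set2.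
case/orP => /eqP Ha; case/orP => /eqP Hb; case/orP => /eqP Hc; subst => //;
  exfalso; lia.
Qed.

Lemma sdiff_eq n (E S T : {set 'I_n * 'I_n}) :
  (E :\: S) :|: (S :\: E) = T <-> S = (E :\: T) :|: (T :\: E).
Proof.
split => [<-|->]; apply/setP => p; rewrite !inE;
  by case: (p \in S); case: (p \in E); case: (p \in T).
Qed.

Lemma normS0 (V : finType) (S : {set V * V}) : (normS S <= 0) = (S == set0).
Proof. by rewrite leqn0 /normS cards_eq0 imset_eq0. Qed.

Lemma RM_target m phi n (E T : {set 'I_n * 'I_n}) k : basic T ->
  (forall E' : {set 'I_n * 'I_n}, basic E' -> (models E' phi <-> E' = T)) ->
  RM m phi E k <-> (normS ((E :\: T) :|: (T :\: E)) <= k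
                    /\ modec m ((E :\: T) :|: (T :\: E)) E).
Proof.
move=> HT Hmod; split.
- move=> [S [H1 H2 H3 H4]].
  have Heq := (Hmod _ H3).1 H4.
  move/sdiff_eq: Heq => Heq; subst S; by split.
- move=> [H1 H2]; exists ((E :\: T) :|: (T :\: E)).
  have Heq : (E :\: ((E :\: T) :|: (T :\: E))) :|: (((E :\: T) :|: (T :\: E)) :\: E) = T
    by apply/sdiff_eq.
  by rewrite Heq; split => //; apply/(Hmod T HT).
Qed.

Lemma RM_const m phi n (E : {set 'I_n * 'I_n}) k (C : Prop) : basic E ->
  (forall E' : {set 'I_n * 'I_n}, basic E' -> (models E' phi <-> C)) ->
  (RM m phi E k <-> C).
Proof.
move=> HE Hmod; split.
- by move=> [S [_ _ H3 H4]]; apply/(Hmod _ H3).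
- move=> HC; exists set0; split.
  + by rewrite /normS imset0 cards0.
  + by case: m => //=; [apply: sub0set | rewrite -setI_eq0 set0I].
  + by rewrite setD0 set0D setU0.
  + by rewrite setD0 set0D setU0; apply/(Hmod _ HE).
Qed.

Lemma basic_Tc n : basic (Tc n).
Proof. split => [u v|u]; rewrite !inE //=; [by rewrite eq_sym | by rewrite eqxx]. Qed.

Lemma basic_set0 n : basic (set0 : {set 'I_n * 'I_n}).
Proof. by split => [u v|u]; rewrite !inE. Qed.

Lemma lt_neq n (u v : 'I_n) : u < v -> u != v.
Proof. by move=> H; apply/negP => /eqP huv; rewrite huv ltnn in H. Qed.

Lemma RM_Tc m phi n (E : {set 'I_n * 'I_n}) k : basic E ->
  (forall E' : {set 'I_n * 'I_n}, basic E' -> (models E' phi <-> E' = Tc n)) ->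
  RM m phi E k <-> #|Dset n :\: E| <= (if m is Del then 0 else k).
Proof.
move=> [Hsym Hirr] Hmod; rewrite (RM_target _ _ _ (basic_Tc n) Hmod).
have HS : (E :\: Tc n) :|: (Tc n :\: E) = Tc n :\: E.
  apply/setP => [[u v]]; rewrite !inE /=.
  case: eqP => [->|] //=; by rewrite (negbTE (Hirr v)).
rewrite HS.
have Hn : normS (Tc n :\: E) = #|Dset n :\: E|.
  rewrite normS_sym; last first.
  - by move=> u; rewrite !inE /= eqxx andbF.
  - move=> u v; rewrite !inE /= => /andP[H1 H2]; rewrite eq_sym H2 andbT; apply/negP => /Hsym; exact/negP.
  apply: eq_card => [[u v]]; rewrite !inE /=.
  by case H: (u < v); rewrite ?andbT ?andbF // (lt_neq H) andbT.
have Hdis : [disjoint Tc n :\: E & E].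
  by rewrite -setI_eq0; apply/eqP/setP => p; rewrite !inE; case: (p \in E); rewrite ?andbF.
rewrite -Hn; case: m => /=.
- split => [[_ /setIidPl]|H].
  + by move: (disjoint_setI0 Hdis) => -> <-; rewrite normS0.
  + move: H; rewrite normS0 => /eqP ->; split; [by rewrite /normS imset0 cards0 | exact: sub0set].
- by split => [[]|].
- by split => [[]|].
Qed.

Lemma RM_T0 m phi n (E : {set 'I_n * 'I_n}) k : basic E ->
  (forall E' : {set 'I_n * 'I_n}, basic E' -> (models E' phi <-> E' = set0)) ->
  RM m phi E k <-> #|Dset n :&: E| <= (if m is Add then 0 else k).
Proof.
move=> [Hsym Hirr] Hmod; rewrite (RM_target _ _ _ (basic_set0 n) Hmod).
rewrite setD0 set0D setU0.
have Hn : normS E = #|Dset n :&: E| by rewrite normS_sym // setIC.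
rewrite -Hn; case: m => /=.
- by split => [[]|].
- split => [[_ H]|H].
  + by move: (disjoint_setI0 H); rewrite setIid => ->; rewrite normS0.
  + split; first by apply: leq_trans H _.
    by move: H; rewrite normS0 => /eqP ->; rewrite -setI_eq0 set0I.
- by split => [[]|].
Qed.

Fixpoint ev (f : form) (eqv e : bool) : bool :=
  match f with
  | FE i j => if i == j then false else e
  | FEq i j => (i == j) || eqv
  | FNot g => ~~ ev g eqv e
  | FAnd g h => ev g eqv e && ev h eqv e
  | FOr g h => ev g eqv e || ev h eqv e
  | _ => false
  end.

Lemma sat_ev n (E' : {set 'I_n * 'I_n}) psi (u v : 'I_n) : basic E' -> qfree psi ->
  bounded 2 psi ->
  (sat (fun a b => (a, b) \in E') [:: v; u] psi <-> ev psi (v == u) ((u, v) \in E')).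
Proof.
move=> [Hsym Hirr]; elim: psi => //=.
- move=> i j _ /andP[Hi Hj].
  have Hs : ((v, u) \in E') = ((u, v) \in E') by apply/idP/idP => /Hsym.
  by case: i Hi => [|[|i]] // _; case: j Hj => [|[|j]] // _ /=;
    rewrite ?Hs ?(negbTE (Hirr v)) ?(negbTE (Hirr u)).
- move=> i j _ /andP[Hi Hj].
  by case: i Hi => [|[|i]] // _; case: j Hj => [|[|j]] // _ /=;
    split => [->|/eqP ->].
- move=> g IH Hq Hb; rewrite IH //; split => [H|/negP //]; exact/negP.
- move=> g IHg h IHh /andP[Hq1 Hq2] /andP[Hb1 Hb2].
  by rewrite IHg // IHh //; split => [[-> ->]|/andP].
- move=> g IHg h IHh /andP[Hq1 Hq2] /andP[Hb1 Hb2].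
  by rewrite IHg // IHh //; split => [[->|->]|/orP]; rewrite ?orbT.
Qed.

Lemma models_pt n (E' : {set 'I_n * 'I_n}) psi : basic E' -> qfree psi -> bounded 2 psi ->
  (models E' (FAll (FAll psi)) <->
   forall u v : 'I_n, if v == u then ev psi true false
                      else if (u, v) \in E' then ev psi false true else ev psi false false).
Proof.
move=> HE Hq Hb; rewrite /models /=; split => H u v.
- have := (sat_ev u v HE Hq Hb).1 (H u v).
  case: eqP => [->|_]; first by rewrite (negbTE (HE.2 u)).
  by case: ((u, v) \in E').
- apply/(sat_ev u v HE Hq Hb); move: (H u v).
  case: eqP => [->|_]; first by rewrite (negbTE (HE.2 u)).
  by case: ((u, v) \in E').
Qed.

Lemma all_mkseq (T : Type) (P : pred T) f W :
  (forall t, t < W -> P (f t)) -> all P (mkseq f W).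
Proof.
move=> H; rewrite /mkseq all_map; apply/allP => t; rewrite mem_iota add0n => /andP[_ Ht].
exact: H.
Qed.

Lemma nth_cat_r (T : Type) (d : T) s1 s2 i : nth d (s1 ++ s2) (size s1 + i) = nth d s2 i.
Proof. by rewrite nth_cat ifF; [rewrite addKn | lia]. Qed.

Lemma nth_map_mkseq (T U : Type) (d : U) (g : T -> U) (f : nat -> T) W t :
  t < W -> nth d (map g (mkseq f W)) t = g (f t).
Proof.
move=> Ht; rewrite (nth_map (f 0)) ?size_mkseq // nth_mkseq //.
Qed.

Lemma all_mkseqP (P : pred nat) W : reflect (forall t, t < W -> P t) (all P (mkseq id W)).
Proof.
rewrite /mkseq map_id; apply: (iffP allP) => H t Ht.
- by apply: H; rewrite mem_iota.
- by apply: H; move: Ht; rewrite mem_iota.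
Qed.

Lemma size_foldl_rcons (A : Type) (f : seq A -> gate -> A) ds B :
  size (foldl (fun ds g => rcons ds (f ds g)) ds B) = size ds + size B.
Proof. by elim: B ds => [|g B IH] ds /=; rewrite ?addn0 // IH size_rcons addSnnS. Qed.

Lemma four_blocks B0 B1 B2 B3 :
  all (refs_lt 0) B0 -> all (refs_lt (size B0)) B1 ->
  all (refs_lt (size B0 + size B1)) B2 -> all (refs_lt (size B0 + size B1 + size B2)) B3 ->
  depth (B0 ++ B1 ++ B2 ++ B3) <= 4 /\
  forall x, let v0 := map (gate_val x [::]) B0 in
            let v1 := map (gate_val x v0) B1 in
            let v2 := map (gate_val x (v0 ++ v1)) B2 in
            gate_values x (B0 ++ B1 ++ B2 ++ B3) =
            ((v0 ++ v1) ++ v2) ++ map (gate_val x ((v0 ++ v1) ++ v2)) B3.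
Proof.
move=> H0 H1 H2 H3; split.
- rewrite /depth !foldl_cat.
  rewrite foldl_block_d; last by rewrite !size_foldl_rcons.
  rewrite foldl_block_d; last by rewrite !size_foldl_rcons.
  rewrite foldl_block_d; last by rewrite !size_foldl_rcons.
  rewrite (@foldl_block_d [::]) //.
  rewrite foldr_maxn_le.
  by do 4! apply: step_depth.
- move=> x /=; rewrite /gate_values !foldl_cat.
  rewrite foldl_block; last by rewrite !size_foldl_rcons.
  rewrite foldl_block; last by rewrite !size_foldl_rcons.
  rewrite foldl_block; last by rewrite !size_foldl_rcons.
  rewrite (@foldl_block x [::]) //.
Qed.

Section Cmp.
Variables (n b : nat) (neg usek : bool).
Let nn := n * n.
Let W := nn.+1.
Let P := #|Dset n|.
Definition idx (p : 'I_n * 'I_n) : nat := p.1 * n + p.2.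
Definition wf (j : nat) : wire := if neg then inr j else inl j.
Definition ws := [seq wf (idx p) | p <- enum (Dset n)].
Definition kws := flatten [seq nseq (minn (2 ^ i) W) (inl (nn + i) : wire) | i <- iota 0 b].
Definition Kg s := if usek then GThr s kws else GOr [::].
Definition B0 := mkseq (fun q => GNot (inl q)) nn.
Definition B1 := mkseq (fun t => GThr (P - t) ws) W ++ mkseq (fun t => Kg t.+1) W.
Definition B2 := mkseq (fun t => GOr [:: inr (nn + t); inr (nn + W + t)]) W.
Definition B3 := [:: GAnd (mkseq (fun t => inr (nn + W + W + t)) W)].
Definition Ccmp := B0 ++ B1 ++ B2 ++ B3.

Lemma idx_lt p : idx p < nn.
Proof. rewrite /idx /nn; case: p => [[i Hi] [j Hj]] /=; nia. Qed.

Lemma Ccmp_blocks :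
  all (refs_lt 0) B0 /\ all (refs_lt (size B0)) B1 /\
  all (refs_lt (size B0 + size B1)) B2 /\ all (refs_lt (size B0 + size B1 + size B2)) B3.
Proof.
have S0 : size B0 = nn by rewrite size_mkseq.
have S1 : size B1 = W + W by rewrite size_cat !size_mkseq.
have S2 : size B2 = W by rewrite size_mkseq.
rewrite S0 S1 S2; split; [|split; [|split]].
- by apply: all_mkseq.
- rewrite all_cat; apply/andP; split; apply: all_mkseq => t Ht //=.
  + rewrite /refs_lt /= /ws all_map; apply/allP => p _ /=.
    by rewrite /wf; case: neg => //=; apply: idx_lt.
  + rewrite /Kg; case: usek => //=; rewrite /refs_lt /= /kws.
    apply/allP => w /flattenP [s /mapP [i _ ->]] /nseqP [-> _] //.
- by apply: all_mkseq => t Ht /=; rewrite /refs_lt /=; apply/and3P; split => //; lia.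
- rewrite /B3 /= andbT /refs_lt; apply: (@all_mkseq _ (wire_ok _)) => t Ht /=; lia.
Qed.

Lemma Ccmp_depth : depth Ccmp <= 4.
Proof.
by have [H0 [H1 [H2 H3]]] := Ccmp_blocks; have [-> _] := four_blocks H0 H1 H2 H3.
Qed.

Lemma cmp_arith X Y K : X + Y = P -> P < W ->
  (X <= K) = [forall t : 'I_W, (P - t <= Y) || (t.+1 <= K)].
Proof.
move=> HXY HP; apply/idP/forallP => [H t|H].
- case: (leqP t.+1 K) => H2; rewrite ?orbT // orbF; lia.
- case: (leqP X K) => // HK.
  have Ht : X.-1 < W by lia.
  have := H (Ordinal Ht); rewrite /=; case/orP => H3; exfalso; lia.
Qed.


Lemma count_memE (E : {set 'I_n * 'I_n}) :
  count (mem E) (enum (Dset n)) = #|Dset n :&: E|.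
Proof. by rewrite cardE (perm_size (enum_setI _ _)) size_filter. Qed.

Lemma count_nmemE (E : {set 'I_n * 'I_n}) :
  count (predC (mem E)) (enum (Dset n)) = #|Dset n :\: E|.
Proof.
have H1 := count_predC (mem E) (enum (Dset n)).
have H2 := cardsID E (Dset n).
rewrite -cardE count_memE in H1; lia.
Qed.

Lemma Ccmp_eval (E : {set 'I_n * 'I_n}) k : k < 2 ^ b ->
  eval Ccmp (enc b E k) =
  ((if neg then #|Dset n :&: E| else #|Dset n :\: E|) <= (if usek then k else 0)).
Proof.
move=> Hk.
set x := enc b E k.
have [H0 [H1 [H2 H3]]] := Ccmp_blocks.
have [_ Hv] := four_blocks H0 H1 H2 H3.
rewrite /eval /Ccmp Hv {1}/B3 map_cons [map _ [::]]/= cats1 last_rcons.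
set v0 := map (gate_val x [::]) B0.
set v1 := map (gate_val x v0) B1.
set v2 := map (gate_val x (v0 ++ v1)) B2.
have Sv0 : size v0 = nn by rewrite size_map size_mkseq.
have Sv1 : size v1 = W + W by rewrite size_map size_cat !size_mkseq.
have Hv0 : forall p, nth false v0 (idx p) = ~~ (p \in E).
  move=> [i j]; rewrite /v0 nth_map_mkseq ?idx_lt //= /x /idx /= enc_edge //.
have HY : count (wire_val x v0) ws =
          (if neg then #|Dset n :\: E| else #|Dset n :&: E|).
  rewrite /ws count_map -count_memE -count_nmemE.
  rewrite /wf; case: neg => /=; apply: eq_count => p /=.
  - by rewrite Hv0.
  - by case: p => i j; rewrite /x /idx enc_edge.
have HK : forall t, t < W -> gate_val x v0 (Kg t.+1) = usek && (t.+1 <= k).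
  move=> t Ht; rewrite /Kg; case: usek => //=.
  rewrite /kws count_flatten -map_comp.
  have -> : [seq (count (wire_val x v0) \o (fun i => nseq (minn (2 ^ i) W) (inl (nn + i) : wire))) i
            | i <- iota 0 b] = [seq odd (k %/ 2 ^ i) * minn (2 ^ i) W | i <- iota 0 b].
    apply/eq_in_map => i; rewrite mem_iota add0n => /andP[_ Hi] /=.
    by rewrite count_nseq /= /x enc_bit.
  by rewrite sumn_iota kcount_spec.
have HT : forall t, t < W -> nth false ((v0 ++ v1) ++ v2) (nn + W + W + t) =
   (P - t <= (if neg then #|Dset n :\: E| else #|Dset n :&: E|)) || (usek && (t.+1 <= k)).
  move=> t Ht.
  have -> : nn + W + W + t = size (v0 ++ v1) + t by rewrite size_cat Sv0 Sv1 addnA.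
  rewrite nth_cat_r /v2 nth_map_mkseq //.
  rewrite [gate_val _ _ (GOr _)]/= orbF.
  rewrite -addnA -Sv0 !nth_cat_r.
  rewrite /v1 map_cat !nth_cat !size_map size_iota Ht ifF; last by lia.
  rewrite addKn !nth_map_mkseq // HK //.
  by rewrite [gate_val _ _ (GThr _ _)]/= HY.
have HPW : P < W by rewrite /P /W ltnS /nn; apply: leq_trans (max_card _) _; rewrite card_prod card_ord.
rewrite (@cmp_arith _ (if neg then #|Dset n :\: E| else #|Dset n :&: E|)) //; last first.
  by have := cardsID E (Dset n); case: neg => //; rewrite addnC.
apply/allP/forallP => H.
- move=> t.
  have Hm : (inr (nn + W + W + t) : wire) \in mkseq (fun t0 => inr (nn + W + W + t0)) W.
    by rewrite /mkseq; apply/mapP; exists (val t) => //; rewrite mem_iota add0n ltn_ord.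
  have := H _ Hm; rewrite [wire_val _ _ _]/= HT //.
  by case: usek; rewrite ?ltn0 ?andbF.
- move=> w /mapP [t]; rewrite mem_iota add0n => /andP[_ Ht] -> /=.
  rewrite HT //; have := H (Ordinal Ht) => /=.
  by case: usek; rewrite ?ltn0 ?andbF.
Qed.

End Cmp.

Lemma sumn_map_le (T : Type) (f : T -> nat) s m : (forall x, f x <= m) ->
  sumn (map f s) <= size s * m.
Proof. by move=> H; elim: s => //= a s IH; rewrite mulSn leq_add. Qed.

Lemma final_bound N s F : 0 < N -> s <= 4 * N -> F <= N * N + 2 ->
  s + s * F <= 16 * N ^ 16.
Proof.
move=> HN Hs HF.
have H1 : s + s * F <= 4 * N + 4 * N * (N * N + 2) by apply: leq_add => //; apply: leq_mul.
have H2 : 4 * N + 4 * N * (N * N + 2) <= 16 * (N * N * N) by nia.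
have H3 : N * N * N <= N ^ 16.
  have -> : N * N * N = N ^ 3 by rewrite !expnS expn0 muln1 mulnA.
  by rewrite leq_pexp2l.
apply: leq_trans H1 _; apply: leq_trans H2 _; by rewrite leq_mul2l H3 orbT.
Qed.

Lemma Ccmp_size n b neg usek :
  csize (Ccmp n b neg usek) <= 16 * (n * n + b).+1 ^ 16.
Proof.
set N := (n * n + b).+1.
rewrite /csize.
have HS : size (Ccmp n b neg usek) <= 4 * N.
  rewrite /Ccmp /B0 /B1 /B2 /B3 !size_cat !size_mkseq /=; lia.
have HF : all (fun g => gate_fanin g <= N * N + 2) (Ccmp n b neg usek).
  rewrite /Ccmp !all_cat; apply/and4P; split.
  - by apply: all_mkseq => t _ /=; nia.
  - apply/andP; split; apply: all_mkseq => t _ /=.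
    + rewrite /ws size_map -cardE.
      apply: leq_trans (max_card _) _; rewrite card_prod card_ord; nia.
    + rewrite /Kg; case: (usek) => //=.
      rewrite /kws size_flatten /shape -map_comp.
      have H := @sumn_map_le _ (size \o (fun i => nseq (minn (2 ^ i) (n * n).+1) (inl (n * n + i) : wire))) (iota 0 b) (n * n).+1.
      apply: leq_trans (H _) _.
      * by move=> i /=; rewrite size_nseq geq_minr.
      * rewrite size_iota; nia.
  - by apply: all_mkseq => t _ /=; nia.
  - rewrite /B3 /= andbT size_map size_iota; nia.
apply: leq_trans (leq_add (leqnn _) (sumn_fanin_le HF)) _.
by apply: final_bound.
Qed.

Definition Cconst (c : bool) : circuit := [:: if c then GAnd [::] else GOr [::]].

Theorem lemma4p10 (m : mode) (phi : form) :
  sentence phi -> is_aa phi ->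
  in_TC0 (fun n (E : {set 'I_n * 'I_n}) k => RM m phi E k).
Proof.
move=> Hs [psi [Hphi Hq]]; subst phi.
have Hb : bounded 2 psi := Hs.
exists 4, 16 => n b.
have Hmp : forall E' : {set 'I_n * 'I_n}, basic E' -> _ := fun E' HE' => models_pt HE' Hq Hb.
have Hconst : forall c : bool,
    (forall E' : {set 'I_n * 'I_n}, basic E' -> (models E' (FAll (FAll psi)) <-> c)) ->
    exists C, [/\ depth C <= 4, csize C <= 16 * (n * n + b).+1 ^ 16
      & forall (E : {set 'I_n * 'I_n}) k, basic E -> k < 2 ^ b ->
          (eval C (enc b E k) = true <-> RM m (FAll (FAll psi)) E k)].
  move=> c Hc; exists (Cconst c); split.
  - by case: (c).
  - have H1 : csize (Cconst c) = 1 by case: (c).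
    by rewrite H1 muln_gt0 expn_gt0.
  - move=> E k HE _; rewrite (@RM_const m _ n E k c HE Hc).
    by case: (c).
have Hcmp : forall neg usek : bool,
    (forall (E : {set 'I_n * 'I_n}) k, basic E -> (RM m (FAll (FAll psi)) E k <->
       (if neg then #|Dset n :&: E| else #|Dset n :\: E|) <= (if usek then k else 0))) ->
    exists C, [/\ depth C <= 4, csize C <= 16 * (n * n + b).+1 ^ 16
      & forall (E : {set 'I_n * 'I_n}) k, basic E -> k < 2 ^ b ->
          (eval C (enc b E k) = true <-> RM m (FAll (FAll psi)) E k)].
  move=> neg usek H; exists (Ccmp n b neg usek); split.
  - exact: Ccmp_depth.
  - exact: Ccmp_size.
  - by move=> E k HE Hk; rewrite H // Ccmp_eval.
case Ha: (ev psi true false); last first.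
  apply: (Hconst (n == 0)) => E' HE'; rewrite Hmp //; split => [H|/eqP Hn u v].
  - case: (posnP n) => [Hn0|Hn]; first by apply/eqP.
    by have := H (Ordinal Hn) (Ordinal Hn); rewrite eqxx Ha.
  - by subst n; case: u.
case Hp: (ev psi false true); case Hq': (ev psi false false).
- apply: (Hconst true) => E' HE'; rewrite Hmp //; split => // _ u v.
  by rewrite Ha Hp Hq'; case: (_ == _); case: ((u, v) \in E').
- apply: (Hcmp false (if m is Del then false else true)) => E k HE.
  rewrite RM_Tc //; first by case: (m).
  move=> E' HE'; rewrite Hmp //; rewrite Ha Hp Hq'; split => [H|-> u v].
  + apply/setP => [[u v]]; rewrite inE /=; have := H u v.
    case: eqP => [->|Hne]; first by rewrite eqxx (negbTE (HE'.2 u)).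
    case: (_ \in _) => // _; apply/esym/negP => /eqP Huv; apply: Hne; by rewrite Huv.
  + rewrite inE /=; case: eqP => [//|Hne]; rewrite ifT //.
    by apply/negP => /eqP Huv; apply: Hne; rewrite Huv.
- apply: (Hcmp true (if m is Add then false else true)) => E k HE.
  rewrite RM_T0 //; first by case: (m).
  move=> E' HE'; rewrite Hmp //; rewrite Ha Hp Hq'; split => [H|-> u v].
  + apply/setP => [[u v]]; rewrite inE /=; have := H u v.
    case: eqP => [->|_]; first by rewrite (negbTE (HE'.2 u)).
    by case: (_ \in _).
  + by rewrite inE; case: (_ == _).
- apply: (Hconst (n <= 1)) => E' HE'; rewrite Hmp //; rewrite Ha Hp Hq'.
  split => [H|Hn u v].
  + case: (leqP n 1) => // Hn.
    have H0 : 0 < n by lia.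
    have := H (Ordinal H0) (Ordinal Hn); rewrite /=.
    by rewrite if_same.
  + have -> : v = u by apply: ord_inj; have := ltn_ord u; have := ltn_ord v; lia.
    by rewrite eqxx.
Qed.
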